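(* Let $c_v>\frac12$ and let $\varrho_\pm,p_\pm>0$, $v_\pm\in\mathbb{R}$ be Riemann data for the one-dimensional full Euler system whose 1D Riemann solution consists of a 1-shock, possibly a 2-contact discontinuity, and a 3-shock, with intermediate states $(\varrho_{M-},v_M,p_M)$, $(\varrho_{M+},v_M,p_M)$, and assume $v_M=0$. Let $\varepsilon_{\max}>0$ and functions $\mu_0,\mu_1,\mu_2:(0,\varepsilon_{\max}]\to\mathbb{R}$ be as described in the context (so that $\mu_0(\varepsilon)<\mu_1(\varepsilon)<\mu_2(\varepsilon)$). For $(\varepsilon,\delta)\in(0,\varepsilon_{\max}]\times(0,p_M)$ define $C_1(\varepsilon,\delta)=\frac{2}{(\varrho_{M-}+\varepsilon)(\mu_0-\mu_1)}\Big[-\mu_0\big(c_v(p_M-\delta-p_-)-\tfrac12\varrho_-v_-^2\big)+\mu_1(c_v+1)(p_M-\delta)-\big(\tfrac12\varrho_-v_-^2+(c_v+1)p_-\big)v_-\Big]$, $C_2(\varepsilon,\delta)=\frac{2}{(\varrho_{M+}-\varepsilon)(\mu_2-\mu_1)}\Big[-\mu_2\big(c_v(p_M-\delta-p_+)-\tfrac12\varrho_+v_+^2\big)+\mu_1(c_v+1)(p_M-\delta)-\big(\tfrac12\varrho_+v_+^2+(c_v+1)p_+\big)v_+\Big]$, $\gamma_1(\varepsilon,\delta)=\frac{1}{\varrho_{M-}+\varepsilon}\Big[(\varrho_{M-}+\varepsilon)\frac{C_1}{2}-\varrho_-v_-^2+p_M-\delta-p_--\mu_0\big((\varrho_{M-}+\varepsilon)\mu_1-\varrho_-v_-\big)\Big]$,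 $\gamma_2(\varepsilon,\delta)=\frac{1}{\varrho_{M+}-\varepsilon}\Big[(\varrho_{M+}-\varepsilon)\frac{C_2}{2}-\varrho_+v_+^2+p_M-\delta-p_+-\mu_2\big((\varrho_{M+}-\varepsilon)\mu_1-\varrho_+v_+\big)\Big]$, where $\mu_i=\mu_i(\varepsilon)$ and $C_i=C_i(\varepsilon,\delta)$. Then $\lim_{(\varepsilon,\delta)\to0}C_1(\varepsilon,\delta)=\lim_{(\varepsilon,\delta)\to0}C_2(\varepsilon,\delta)=v_M^2$ and $\lim_{(\varepsilon,\delta)\to0}\gamma_1(\varepsilon,\delta)=\lim_{(\varepsilon,\delta)\to0}\gamma_2(\varepsilon,\delta)=-\frac{v_M^2}{2}$.
   Context: The one-dimensional full Euler system for an ideal gas is $\partial_t\varrho+\partial_2(\varrho v)=0$, $\partial_t(\varrho v)+\partial_2(\varrho v^2+p)=0$, $\partial_t(\frac12\varrho v^2+c_vp)+\partial_2[(\frac12\varrho v^2+(c_v+1)p)v]=0$; its 1D Riemann solution is the unique self-similar BV solution with the given data, consisting of a 1-wave, a possibly absent contact discontinuity and a 3-wave separated by constant states; here both outer waves are admissible shocks with speeds $\sigma_\pm$, and $\varrho_{M\pm}>\varrho_\pm$, $p_M>\max\{p_-,p_+\}$. Define $A(\varepsilon)=\varrho_-(\varrho_{M-}+\varepsilon)(\varrho_{M+}-\varepsilon-\varrho_+)-\varrho_+(\varrho_{M+}-\varepsilon)(\varrho_{M-}+\varepsilon-\varrho_-)$, $B(\varepsilon)=\varrho_-\varrho_+(\varrho_{M-}+\varepsilon)(\varrho_{M+}-\varepsilon)(v_--v_+)^2-(p_--p_+)A(\varepsilon)$,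 $D(\varepsilon)=v_-\varrho_-(\varrho_{M-}+\varepsilon)(\varrho_{M+}-\varepsilon-\varrho_+)-v_+\varrho_+(\varrho_{M+}-\varepsilon)(\varrho_{M-}+\varepsilon-\varrho_-)$. $\varepsilon_{\max}>0$ is such that on $(0,\varepsilon_{\max}]$: $A\neq0$, $B>0$, $\varrho_{M+}-\varepsilon-\varrho_+>0$, $\varrho_{M-}+\varepsilon-\varrho_->0$ and $\mu_0<\mu_1<\mu_2$, where $\mu_0=\frac1A\big[D+\varrho_-\varrho_+(\varrho_{M+}-\varepsilon)(v_--v_+)-\sqrt{(\varrho_{M-}+\varepsilon)^2\frac{\varrho_{M+}-\varepsilon-\varrho_+}{\varrho_{M-}+\varepsilon-\varrho_-}B}\big]$, $\mu_1=\frac1A\big[D-\sqrt{(\varrho_{M-}+\varepsilon-\varrho_-)(\varrho_{M+}-\varepsilon-\varrho_+)B}\big]$, $\mu_2=\frac1A\big[D+\varrho_-\varrho_+(\varrho_{M-}+\varepsilon)(v_--v_+)-\sqrt{(\varrho_{M+}-\varepsilon)^2\frac{\varrho_{M-}+\varepsilon-\varrho_-}{\varrho_{M+}-\varepsilon-\varrho_+}B}\big]$ (all evaluated at $\varepsilon$). The paper shows such $\varepsilon_{\max}$ exists. *)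

(* Defs.v *)
From Stdlib Require Import Reals Lra.
Open Scope R_scope.

(* Notation: left state (rho_-, v_-, p_-) = (rl, vl, pl),
   right state (rho_+, v_+, p_+) = (rr, vr, pr),
   intermediate states (rho_{M-}, v_M, p_M) = (rMl, vM, pM) and
   (rho_{M+}, v_M, p_M) = (rMr, vM, pM). *)

Definition energy (cv r v p : R) : R := / 2 * r * v ^ 2 + cv * p.
Definition energy_flux (cv r v p : R) : R := (/ 2 * r * v ^ 2 + (cv + 1) * p) * v.

Definition RH (cv s r1 v1 p1 r2 v2 p2 : R) : Prop :=
  s * (r2 - r1) = r2 * v2 - r1 * v1 /\
  s * (r2 * v2 - r1 * v1) = (r2 * v2 ^ 2 + p2) - (r1 * v1 ^ 2 + p1) /\
  s * (energy cv r2 v2 p2 - energy cv r1 v1 p1)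
    = energy_flux cv r2 v2 p2 - energy_flux cv r1 v1 p1.

(* The 1D Riemann solution with data (rl,vl,pl),(rr,vr,pr) consists of an
   admissible 1-shock (speed sm) from (rl,vl,pl) to (rMl,vM,pM), a (possibly
   absent, if rMl = rMr) contact discontinuity of speed vM, and an admissible
   3-shock (speed sp) from (rMr,vM,pM) to (rr,vr,pr); admissibility as in the
   context: rho_{M+-} > rho_+-, p_M > max(p_-,p_+). *)
Definition shock_contact_shock (cv rl vl pl rr vr pr rMl rMr vM pM : R) : Prop :=
  exists sm sp : R,
    sm < vM /\ vM < sp /\
    RH cv sm rl vl pl rMl vM pM /\
    RH cv sp rMr vM pM rr vr pr /\
    rMl > rl /\ rMr > rr /\ pM > Rmax pl pr.

Definition Aeps (rl rr rMl rMr e : R) : R :=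
  rl * (rMl + e) * (rMr - e - rr) - rr * (rMr - e) * (rMl + e - rl).

Definition Beps (rl vl pl rr vr pr rMl rMr e : R) : R :=
  rl * rr * (rMl + e) * (rMr - e) * (vl - vr) ^ 2 - (pl - pr) * Aeps rl rr rMl rMr e.

Definition Deps (rl vl rr vr rMl rMr e : R) : R :=
  vl * rl * (rMl + e) * (rMr - e - rr) - vr * rr * (rMr - e) * (rMl + e - rl).

Definition mu0 (rl vl pl rr vr pr rMl rMr e : R) : R :=
  / Aeps rl rr rMl rMr e *
  (Deps rl vl rr vr rMl rMr e + rl * rr * (rMr - e) * (vl - vr)
   - sqrt ((rMl + e) ^ 2 * ((rMr - e - rr) / (rMl + e - rl))
           * Beps rl vl pl rr vr pr rMl rMr e)).

Definition mu1 (rl vl pl rr vr pr rMl rMr e : R) : R :=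
  / Aeps rl rr rMl rMr e *
  (Deps rl vl rr vr rMl rMr e
   - sqrt ((rMl + e - rl) * (rMr - e - rr) * Beps rl vl pl rr vr pr rMl rMr e)).

Definition mu2 (rl vl pl rr vr pr rMl rMr e : R) : R :=
  / Aeps rl rr rMl rMr e *
  (Deps rl vl rr vr rMl rMr e + rl * rr * (rMl + e) * (vl - vr)
   - sqrt ((rMr - e) ^ 2 * ((rMl + e - rl) / (rMr - e - rr))
           * Beps rl vl pl rr vr pr rMl rMr e)).

Definition eps_max_ok (rl vl pl rr vr pr rMl rMr emax : R) : Prop :=
  0 < emax /\
  forall e, 0 < e <= emax ->
    Aeps rl rr rMl rMr e <> 0 /\
    Beps rl vl pl rr vr pr rMl rMr e > 0 /\
    rMr - e - rr > 0 /\ rMl + e - rl > 0 /\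
    mu0 rl vl pl rr vr pr rMl rMr e < mu1 rl vl pl rr vr pr rMl rMr e /\
    mu1 rl vl pl rr vr pr rMl rMr e < mu2 rl vl pl rr vr pr rMl rMr e.

Definition C_1 (cv rl vl pl rr vr pr rMl rMr pM e d : R) : R :=
  let m0 := mu0 rl vl pl rr vr pr rMl rMr e in
  let m1 := mu1 rl vl pl rr vr pr rMl rMr e in
  2 / ((rMl + e) * (m0 - m1)) *
  (- m0 * (cv * (pM - d - pl) - / 2 * rl * vl ^ 2)
   + m1 * (cv + 1) * (pM - d)
   - (/ 2 * rl * vl ^ 2 + (cv + 1) * pl) * vl).

Definition C_2 (cv rl vl pl rr vr pr rMl rMr pM e d : R) : R :=
  let m2 := mu2 rl vl pl rr vr pr rMl rMr e in
  let m1 := mu1 rl vl pl rr vr pr rMl rMr e in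
  2 / ((rMr - e) * (m2 - m1)) *
  (- m2 * (cv * (pM - d - pr) - / 2 * rr * vr ^ 2)
   + m1 * (cv + 1) * (pM - d)
   - (/ 2 * rr * vr ^ 2 + (cv + 1) * pr) * vr).

Definition gamma1 (cv rl vl pl rr vr pr rMl rMr pM e d : R) : R :=
  let m0 := mu0 rl vl pl rr vr pr rMl rMr e in
  let m1 := mu1 rl vl pl rr vr pr rMl rMr e in
  / (rMl + e) *
  ((rMl + e) * (C_1 cv rl vl pl rr vr pr rMl rMr pM e d / 2)
   - rl * vl ^ 2 + pM - d - pl - m0 * ((rMl + e) * m1 - rl * vl)).

Definition gamma2 (cv rl vl pl rr vr pr rMl rMr pM e d : R) : R :=
  let m2 := mu2 rl vl pl rr vr pr rMl rMr e in
  let m1 := mu1 rl vl pl rr vr pr rMl rMr e in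
  / (rMr - e) *
  ((rMr - e) * (C_2 cv rl vl pl rr vr pr rMl rMr pM e d / 2)
   - rr * vr ^ 2 + pM - d - pr - m2 * ((rMr - e) * m1 - rr * vr)).

Definition lim_at0 (emax pM : R) (f : R -> R -> R) (L : R) : Prop :=
  forall eta, 0 < eta -> exists r, 0 < r /\
    forall e d, 0 < e <= emax -> 0 < d < pM -> e < r -> d < r ->
      Rabs (f e d - L) < eta.

(* Main.v *)
Require Import Defs.
From Stdlib Require Import Reals Lra Lia Psatz.
From Coquelicot Require Import Coquelicot.
Open Scope R_scope.

Definition SS0 (rl vl pl rr vr pr rMl rMr e : R) : R :=
  (rMl + e) ^ 2 * ((rMr - e - rr) / (rMl + e - rl)) * Beps rl vl pl rr vr pr rMl rMr e.
Definition NN0 (rl vl pl rr vr pr rMl rMr e : R) : R :=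
  Deps rl vl rr vr rMl rMr e + rl * rr * (rMr - e) * (vl - vr).
Definition qq0 (rl vl pl rr vr pr rMl rMr e : R) : R :=
  let al := rMl + e in let be := rMr - e in let a := al - rl in let b := be - rr in
  let Y := rr * be * a in let Dl := vl - vr in
  (a ^ 2 * vl ^ 2 * Aeps rl rr rMl rMr e + 2 * a * vl * al * Y * Dl - al ^ 2 * Y * Dl ^ 2
   + a * al ^ 2 * b * (pl - pr)) / a ^ 2.
Definition MM0 rl vl pl rr vr pr rMl rMr e :=
  qq0 rl vl pl rr vr pr rMl rMr e / (NN0 rl vl pl rr vr pr rMl rMr e + sqrt (SS0 rl vl pl rr vr pr rMl rMr e)).

Definition SS1 (rl vl pl rr vr pr rMl rMr e : R) : R :=
  (rMl + e - rl) * (rMr - e - rr) * Beps rl vl pl rr vr pr rMl rMr e.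
Definition NN1 (rl vl pl rr vr pr rMl rMr e : R) : R := Deps rl vl rr vr rMl rMr e.
Definition qq1 (rl vl pl rr vr pr rMl rMr e : R) : R :=
  let al := rMl + e in let be := rMr - e in let a := al - rl in let b := be - rr in
  vl ^ 2 * (rl * al * b) - vr ^ 2 * (rr * be * a) + a * b * (pl - pr).
Definition MM1 rl vl pl rr vr pr rMl rMr e :=
  qq1 rl vl pl rr vr pr rMl rMr e / (NN1 rl vl pl rr vr pr rMl rMr e + sqrt (SS1 rl vl pl rr vr pr rMl rMr e)).

Definition SS2 (rl vl pl rr vr pr rMl rMr e : R) : R :=
  (rMr - e) ^ 2 * ((rMl + e - rl) / (rMr - e - rr)) * Beps rl vl pl rr vr pr rMl rMr e.
Definition NN2 (rl vl pl rr vr pr rMl rMr e : R) : R :=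
  Deps rl vl rr vr rMl rMr e + rl * rr * (rMl + e) * (vl - vr).
Definition qq2 (rl vl pl rr vr pr rMl rMr e : R) : R :=
  let al := rMl + e in let be := rMr - e in let a := al - rl in let b := be - rr in
  let X := rl * al * b in let Dl := vl - vr in
  (b ^ 2 * vr ^ 2 * Aeps rl rr rMl rMr e + 2 * b * vr * be * X * Dl + be ^ 2 * X * Dl ^ 2
   + a * b * be ^ 2 * (pl - pr)) / b ^ 2.
Definition MM2 rl vl pl rr vr pr rMl rMr e :=
  qq2 rl vl pl rr vr pr rMl rMr e / (NN2 rl vl pl rr vr pr rMl rMr e + sqrt (SS2 rl vl pl rr vr pr rMl rMr e)).

Lemma root_eq (N s A q : R) : A <> 0 -> N + s <> 0 -> N ^ 2 - s * s = A * q ->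
  / A * (N - s) = q / (N + s).
Proof.
  intros HA Hs H.
  assert (q = (N - s) * (N + s) / A) as ->.
  { apply (Rmult_eq_reg_l A); auto. rewrite <- H. field. auto. }
  field. auto.
Qed.

Lemma mu0_eq rl vl pl rr vr pr rMl rMr e :
  Aeps rl rr rMl rMr e <> 0 -> rMl + e - rl <> 0 -> 0 <= SS0 rl vl pl rr vr pr rMl rMr e ->
  NN0 rl vl pl rr vr pr rMl rMr e + sqrt (SS0 rl vl pl rr vr pr rMl rMr e) <> 0 ->
  mu0 rl vl pl rr vr pr rMl rMr e = MM0 rl vl pl rr vr pr rMl rMr e.
Proof.
  intros HA Ha HS HN. unfold mu0, MM0. apply root_eq; auto.
  fold (SS0 rl vl pl rr vr pr rMl rMr e). rewrite sqrt_sqrt by auto.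
  unfold SS0, NN0, qq0, Beps, Deps, Aeps. field. auto.
Qed.

Lemma mu1_eq rl vl pl rr vr pr rMl rMr e :
  Aeps rl rr rMl rMr e <> 0 -> 0 <= SS1 rl vl pl rr vr pr rMl rMr e ->
  NN1 rl vl pl rr vr pr rMl rMr e + sqrt (SS1 rl vl pl rr vr pr rMl rMr e) <> 0 ->
  mu1 rl vl pl rr vr pr rMl rMr e = MM1 rl vl pl rr vr pr rMl rMr e.
Proof.
  intros HA HS HN. unfold mu1, MM1. apply root_eq; auto.
  fold (SS1 rl vl pl rr vr pr rMl rMr e). rewrite sqrt_sqrt by auto.
  unfold SS1, NN1, qq1, Beps, Deps, Aeps. ring.
Qed.

Lemma mu2_eq rl vl pl rr vr pr rMl rMr e :
  Aeps rl rr rMl rMr e <> 0 -> rMr - e - rr <> 0 -> 0 <= SS2 rl vl pl rr vr pr rMl rMr e ->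
  NN2 rl vl pl rr vr pr rMl rMr e + sqrt (SS2 rl vl pl rr vr pr rMl rMr e) <> 0 ->
  mu2 rl vl pl rr vr pr rMl rMr e = MM2 rl vl pl rr vr pr rMl rMr e.
Proof.
  intros HA Ha HS HN. unfold mu2, MM2. apply root_eq; auto.
  fold (SS2 rl vl pl rr vr pr rMl rMr e). rewrite sqrt_sqrt by auto.
  unfold SS2, NN2, qq2, Beps, Deps, Aeps. field. auto.
Qed.

Lemma at0 rl vl pl rr vr pr rMl rMr pM sm sp :
 rl > 0 -> rr > 0 -> rMl > rl -> rMr > rr -> sm < 0 -> 0 < sp ->
 sm * (rMl - rl) = rMl * 0 - rl * vl ->
 sm * (rMl * 0 - rl * vl) = (rMl * 0 ^ 2 + pM) - (rl * vl ^ 2 + pl) ->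
 sp * (rr - rMr) = rr * vr - rMr * 0 ->
 sp * (rr * vr - rMr * 0) = (rr * vr ^ 2 + pr) - (rMr * 0 ^ 2 + pM) ->
 MM0 rl vl pl rr vr pr rMl rMr 0 = sm /\ MM1 rl vl pl rr vr pr rMl rMr 0 = 0 /\
 MM2 rl vl pl rr vr pr rMl rMr 0 = sp /\
 0 < SS0 rl vl pl rr vr pr rMl rMr 0 /\ 0 < SS1 rl vl pl rr vr pr rMl rMr 0 /\
 0 < SS2 rl vl pl rr vr pr rMl rMr 0 /\
 0 < NN0 rl vl pl rr vr pr rMl rMr 0 /\ 0 < NN1 rl vl pl rr vr pr rMl rMr 0 /\
 0 < NN2 rl vl pl rr vr pr rMl rMr 0.
Proof.
  intros Hrl Hrr HMl HMr Hsm Hsp E1 E2 E3 E4.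
  assert (Hvl : vl = - sm * (rMl - rl) / rl).
  { apply (Rmult_eq_reg_l rl); [| lra]. field_simplify; [lra | lra]. }
  assert (Hvr : vr = - sp * (rMr - rr) / rr).
  { apply (Rmult_eq_reg_l rr); [| lra]. field_simplify; [lra | lra]. }
  assert (Hpl : pl = pM - rl * vl ^ 2 + sm * rl * vl) by lra.
  assert (Hpr : pr = pM - rr * vr ^ 2 + sp * rr * vr) by lra.
  clear E1 E2 E3 E4.
  assert (Ha : 0 < rMl - rl) by lra. assert (Hb : 0 < rMr - rr) by lra.
  assert (Pa : 0 < - sm) by lra.
  set (A0 := Aeps rl rr rMl rMr 0).
  assert (EA : A0 = rl * rMl * (rMr - rr) - rr * rMr * (rMl - rl)) by (unfold A0, Aeps; ring).
  assert (EN0 : NN0 rl vl pl rr vr pr rMl rMr 0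
     = (rMl - rl)*(rMr - rr)*sp*rMr + (rMl - rl)*(rMr - rr)*(-sm)*rMl + (-sm)*(rMl - rl)*rr*rMr + sp*(rMr - rr)*rl*rMr).
  { unfold NN0, Deps. rewrite Hvl, Hvr. field. lra. }
  assert (EK0 : NN0 rl vl pl rr vr pr rMl rMr 0 - sm * A0
     = (rMr - rr) * ((rMl - rl)*sp*rMr + (rMl - rl)*(-sm)*rMl + sp*rl*rMr + (-sm)*rl*rMl)).
  { rewrite EN0, EA. ring. }
  assert (PK0 : 0 < (rMr - rr) * ((rMl - rl)*sp*rMr + (rMl - rl)*(-sm)*rMl + sp*rl*rMr + (-sm)*rl*rMl)).
  { apply Rmult_lt_0_compat; auto.
    assert (0 < (rMl - rl)*sp*rMr) by (repeat apply Rmult_lt_0_compat; lra).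
    assert (0 < (rMl - rl)*(-sm)*rMl) by (repeat apply Rmult_lt_0_compat; lra).
    assert (0 < sp*rl*rMr) by (repeat apply Rmult_lt_0_compat; lra).
    assert (0 < (-sm)*rl*rMl) by (repeat apply Rmult_lt_0_compat; lra). lra. }
  assert (PN0 : 0 < NN0 rl vl pl rr vr pr rMl rMr 0).
  { rewrite EN0.
    assert (0 < (rMl - rl)*(rMr - rr)*sp*rMr) by (repeat apply Rmult_lt_0_compat; lra).
    assert (0 < (rMl - rl)*(rMr - rr)*(-sm)*rMl) by (repeat apply Rmult_lt_0_compat; lra).
    assert (0 < (-sm)*(rMl - rl)*rr*rMr) by (repeat apply Rmult_lt_0_compat; lra).
    assert (0 < sp*(rMr - rr)*rl*rMr) by (repeat apply Rmult_lt_0_compat; lra). lra. }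
  assert (ES0 : SS0 rl vl pl rr vr pr rMl rMr 0 = (NN0 rl vl pl rr vr pr rMl rMr 0 - sm * A0) ^ 2).
  { unfold SS0, NN0, A0, Beps, Deps, Aeps. rewrite Hpl, Hpr, Hvl, Hvr. field. lra. }
  assert (Eq0 : qq0 rl vl pl rr vr pr rMl rMr 0 = sm * (2 * NN0 rl vl pl rr vr pr rMl rMr 0 - sm * A0)).
  { unfold qq0, NN0, A0, Beps, Deps, Aeps. rewrite Hpl, Hpr, Hvl, Hvr. field. lra. }
  assert (M0v : MM0 rl vl pl rr vr pr rMl rMr 0 = sm).
  { unfold MM0. rewrite ES0, sqrt_pow2 by lra. rewrite Eq0. field. lra. }
  assert (EN1 : NN1 rl vl pl rr vr pr rMl rMr 0
     = (rMl - rl)*(rMr - rr)*(sp*rMr + (-sm)*rMl)).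
  { unfold NN1, Deps. rewrite Hvl, Hvr. field. lra. }
  assert (PN1 : 0 < NN1 rl vl pl rr vr pr rMl rMr 0).
  { rewrite EN1. apply Rmult_lt_0_compat; [apply Rmult_lt_0_compat; lra|].
    assert (0 < sp*rMr) by (apply Rmult_lt_0_compat; lra).
    assert (0 < (-sm)*rMl) by (apply Rmult_lt_0_compat; lra). lra. }
  assert (ES1 : SS1 rl vl pl rr vr pr rMl rMr 0 = (NN1 rl vl pl rr vr pr rMl rMr 0) ^ 2).
  { unfold SS1, NN1, Beps, Deps, Aeps. rewrite Hpl, Hpr, Hvl, Hvr. field. lra. }
  assert (Eq1 : qq1 rl vl pl rr vr pr rMl rMr 0 = 0).
  { unfold qq1. rewrite Hpl, Hpr, Hvl, Hvr. field. lra. }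
  assert (M1v : MM1 rl vl pl rr vr pr rMl rMr 0 = 0).
  { unfold MM1. rewrite ES1, sqrt_pow2 by lra. rewrite Eq1. field. lra. }
  assert (EN2 : NN2 rl vl pl rr vr pr rMl rMr 0
     = (rMl - rl)*(rMr - rr)*sp*rMr + (rMl - rl)*(rMr - rr)*(-sm)*rMl + (-sm)*(rMl - rl)*rr*rMl + sp*(rMr - rr)*rl*rMl).
  { unfold NN2, Deps. rewrite Hvl, Hvr. field. lra. }
  assert (EK2 : NN2 rl vl pl rr vr pr rMl rMr 0 - sp * A0
     = (rMl - rl) * ((rMr - rr)*sp*rMr + (rMr - rr)*(-sm)*rMl + (-sm)*rr*rMl + sp*rr*rMr)).
  { rewrite EN2, EA. ring. }
  assert (PK2 : 0 < (rMl - rl) * ((rMr - rr)*sp*rMr + (rMr - rr)*(-sm)*rMl + (-sm)*rr*rMl + sp*rr*rMr)).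
  { apply Rmult_lt_0_compat; auto.
    assert (0 < (rMr - rr)*sp*rMr) by (repeat apply Rmult_lt_0_compat; lra).
    assert (0 < (rMr - rr)*(-sm)*rMl) by (repeat apply Rmult_lt_0_compat; lra).
    assert (0 < (-sm)*rr*rMl) by (repeat apply Rmult_lt_0_compat; lra).
    assert (0 < sp*rr*rMr) by (repeat apply Rmult_lt_0_compat; lra). lra. }
  assert (PN2 : 0 < NN2 rl vl pl rr vr pr rMl rMr 0).
  { rewrite EN2.
    assert (0 < (rMl - rl)*(rMr - rr)*sp*rMr) by (repeat apply Rmult_lt_0_compat; lra).
    assert (0 < (rMl - rl)*(rMr - rr)*(-sm)*rMl) by (repeat apply Rmult_lt_0_compat; lra).
    assert (0 < (-sm)*(rMl - rl)*rr*rMl) by (repeat apply Rmult_lt_0_compat; lra).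
    assert (0 < sp*(rMr - rr)*rl*rMl) by (repeat apply Rmult_lt_0_compat; lra). lra. }
  assert (ES2 : SS2 rl vl pl rr vr pr rMl rMr 0 = (NN2 rl vl pl rr vr pr rMl rMr 0 - sp * A0) ^ 2).
  { unfold SS2, NN2, A0, Beps, Deps, Aeps. rewrite Hpl, Hpr, Hvl, Hvr. field. lra. }
  assert (Eq2 : qq2 rl vl pl rr vr pr rMl rMr 0 = sp * (2 * NN2 rl vl pl rr vr pr rMl rMr 0 - sp * A0)).
  { unfold qq2, NN2, A0, Beps, Deps, Aeps. rewrite Hpl, Hpr, Hvl, Hvr. field. lra. }
  assert (M2v : MM2 rl vl pl rr vr pr rMl rMr 0 = sp).
  { unfold MM2. rewrite ES2, sqrt_pow2 by lra. rewrite Eq2. field. lra. }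
  rewrite ES0, ES1, ES2.
  repeat split; auto; apply pow_lt; lra.
Qed.

Lemma cont_of_deriv f x : ex_derive f x -> continuity_pt f x.
Proof. intro H. apply continuity_pt_filterlim. exact (@ex_derive_continuous R_AbsRing R_NormedModule f x H). Qed.

Lemma near_pos f : continuity_pt f 0 -> 0 < f 0 -> exists r, 0 < r /\ forall e, 0 < e < r -> 0 < f e.
Proof.
  intros Hc Hp. destruct (Hc (f 0) Hp) as [alp [Halp H]].
  exists alp. split; auto. intros e He.
  assert (Hd : R_dist (f e) (f 0) < f 0).
  { apply H. split. split; [exact I | lra]. simpl; simpl; unfold R_dist; rewrite Rminus_0_r, Rabs_pos_eq; lra. }
  simpl in Hd; unfold R_dist in Hd. apply Rabs_def2 in Hd. lra.
Qed.

Lemma lim_affine (emax pM : R) (f : R -> R -> R) (g h : R -> R) L r0 :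
  0 < r0 -> (forall e d, 0 < e <= emax -> e < r0 -> 0 < d < pM -> f e d = g e + d * h e) ->
  continuity_pt g 0 -> continuity_pt h 0 -> g 0 = L -> lim_at0 emax pM f L.
Proof.
  intros Hr0 Hf Hg Hh HL eta Heta.
  destruct (Hg (eta / 2)) as [a1 [Ha1 H1]]; [lra|].
  destruct (Hh 1) as [a2 [Ha2 H2]]; [lra|].
  set (K := Rabs (h 0) + 1).
  assert (HK : 0 < K) by (unfold K; pose proof (Rabs_pos (h 0)); lra).
  set (r3 := eta / (2 * K)).
  assert (Hr3 : 0 < r3) by (unfold r3; apply Rdiv_lt_0_compat; lra).
  exists (Rmin r0 (Rmin a1 (Rmin a2 r3))). split.
  { repeat apply Rmin_pos; auto. }
  intros e d He Hd Her Hdr.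
  assert (e < r0) by (eapply Rlt_le_trans; [exact Her| apply Rmin_l]).
  assert (e < a1) by (eapply Rlt_le_trans; [exact Her| eapply Rle_trans; [apply Rmin_r| apply Rmin_l]]).
  assert (e < a2) by (eapply Rlt_le_trans; [exact Her| eapply Rle_trans; [apply Rmin_r| eapply Rle_trans; [apply Rmin_r| apply Rmin_l]]]).
  assert (d < r3) by (eapply Rlt_le_trans; [exact Hdr| eapply Rle_trans; [apply Rmin_r| eapply Rle_trans; [apply Rmin_r| apply Rmin_r]]]).
  assert (Hdist : forall a, e < a -> D_x no_cond 0 e /\ R_dist e 0 < a).
  { intros a Ha. split. split; [exact I | lra]. simpl; unfold R_dist; rewrite Rminus_0_r, Rabs_pos_eq; lra. }
  specialize (H1 e (Hdist a1 ltac:(assumption))). specialize (H2 e (Hdist a2 ltac:(assumption))).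
  simpl in H1, H2; unfold R_dist in H1, H2.
  assert (Hhe : Rabs (h e) < K).
  { unfold K. pose proof (Rabs_triang_inv (h e) (h 0)). lra. }
  rewrite Hf by auto. rewrite <- HL.
  replace (g e + d * h e - g 0) with ((g e - g 0) + d * h e) by ring.
  eapply Rle_lt_trans; [apply Rabs_triang|].
  rewrite Rabs_mult, (Rabs_pos_eq d) by lra.
  assert (d * Rabs (h e) <= r3 * K).
  { apply Rmult_le_compat; try lra. apply Rabs_pos. }
  assert (r3 * K = eta / 2) by (unfold r3; field; lra).
  lra.
Qed.

Lemma side (cv r v p pM s emax r0 : R) (rho M m1 mu mu1 : R -> R) :
  ex_derive rho 0 -> ex_derive M 0 -> ex_derive m1 0 ->
  rho 0 <> 0 -> M 0 = s -> m1 0 = 0 -> s <> 0 ->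
  s * (- (r * v)) = pM - r * v ^ 2 - p ->
  s * (cv * pM - (/ 2 * r * v ^ 2 + cv * p)) = - ((/ 2 * r * v ^ 2 + (cv + 1) * p) * v) ->
  0 < r0 -> (forall e, 0 < e <= emax -> e < r0 -> mu e = M e /\ mu1 e = m1 e) ->
  lim_at0 emax pM (fun e d => 2 / (rho e * (mu e - mu1 e)) *
     (- mu e * (cv * (pM - d - p) - / 2 * r * v ^ 2) + mu1 e * (cv + 1) * (pM - d)
      - (/ 2 * r * v ^ 2 + (cv + 1) * p) * v)) (0 ^ 2) /\
  lim_at0 emax pM (fun e d => / rho e * (rho e * (2 / (rho e * (mu e - mu1 e)) *
     (- mu e * (cv * (pM - d - p) - / 2 * r * v ^ 2) + mu1 e * (cv + 1) * (pM - d)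
      - (/ 2 * r * v ^ 2 + (cv + 1) * p) * v) / 2)
      - r * v ^ 2 + pM - d - p - mu e * (rho e * mu1 e - r * v))) (- (0 ^ 2 / 2)).
Proof.
  intros Drho DM Dm1 Hrho HM Hm1 Hs Hmom Hen Hr0 Heq.
  assert (Hden : rho 0 * (M 0 + - m1 0) <> 0).
  { rewrite HM, Hm1. apply Rmult_integral_contrapositive; split; auto. lra. }
  assert (Hbr : - s * (cv * (pM - 0 - p) - / 2 * r * v ^ 2) + 0 * (cv + 1) * (pM - 0)
      - (/ 2 * r * v ^ 2 + (cv + 1) * p) * v = 0).
  { replace (- s * (cv * (pM - 0 - p) - / 2 * r * v ^ 2) + 0 * (cv + 1) * (pM - 0)
      - (/ 2 * r * v ^ 2 + (cv + 1) * p) * v) with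
      (- (s * (cv * pM - (/ 2 * r * v ^ 2 + cv * p))) - (/ 2 * r * v ^ 2 + (cv + 1) * p) * v) by ring.
    rewrite Hen. ring. }
  split.
  - apply (lim_affine emax pM _
      (fun e => 2 / (rho e * (M e - m1 e)) *
     (- M e * (cv * (pM - 0 - p) - / 2 * r * v ^ 2) + m1 e * (cv + 1) * (pM - 0)
      - (/ 2 * r * v ^ 2 + (cv + 1) * p) * v))
      (fun e => 2 / (rho e * (M e - m1 e)) * (M e * cv - m1 e * (cv + 1))) _ r0); auto.
    + intros e d He Her Hd. destruct (Heq e He Her) as [-> ->]. ring.
    + apply cont_of_deriv. auto_derive. repeat split; auto.
    + apply cont_of_deriv. auto_derive. repeat split; auto.
    + cbv beta. rewrite HM, Hm1. rewrite Hbr. ring.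
  - apply (lim_affine emax pM _
      (fun e => / rho e * (rho e * (2 / (rho e * (M e - m1 e)) *
     (- M e * (cv * (pM - 0 - p) - / 2 * r * v ^ 2) + m1 e * (cv + 1) * (pM - 0)
      - (/ 2 * r * v ^ 2 + (cv + 1) * p) * v) / 2)
      - r * v ^ 2 + pM - 0 - p - M e * (rho e * m1 e - r * v)))
      (fun e => / rho e * (rho e * ((2 / (rho e * (M e - m1 e)) * (M e * cv - m1 e * (cv + 1))) / 2) - 1)) _ r0); auto.
    + intros e d He Her Hd. destruct (Heq e He Her) as [-> ->]. unfold Rdiv; ring.
    + apply cont_of_deriv. auto_derive. repeat split; auto.
    + apply cont_of_deriv. auto_derive. repeat split; auto.
    + cbv beta. rewrite HM, Hm1. rewrite Hbr.
      transitivity (/ rho 0 * (pM - r * v ^ 2 - p - s * (- (r * v)))).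
      { unfold Rdiv; ring. }
      rewrite Hmom. unfold Rdiv; ring.
Qed.

Ltac sidec := repeat split; auto; repeat apply Rmult_integral_contrapositive_currified; try (apply pow_nonzero); try (intro; lra); try lra.

Lemma dNN0 rl vl pl rr vr pr rMl rMr : ex_derive (NN0 rl vl pl rr vr pr rMl rMr) 0.
Proof. unfold NN0, Deps. auto_derive. sidec. Qed.
Lemma dNN1 rl vl pl rr vr pr rMl rMr : ex_derive (NN1 rl vl pl rr vr pr rMl rMr) 0.
Proof. unfold NN1, Deps. auto_derive. sidec. Qed.
Lemma dNN2 rl vl pl rr vr pr rMl rMr : ex_derive (NN2 rl vl pl rr vr pr rMl rMr) 0.
Proof. unfold NN2, Deps. auto_derive. sidec. Qed.
Lemma dSS0 rl vl pl rr vr pr rMl rMr : rMl - rl <> 0 -> ex_derive (SS0 rl vl pl rr vr pr rMl rMr) 0.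
Proof. intro H. unfold SS0, Beps, Aeps. auto_derive. sidec. Qed.
Lemma dSS1 rl vl pl rr vr pr rMl rMr : ex_derive (SS1 rl vl pl rr vr pr rMl rMr) 0.
Proof. unfold SS1, Beps, Aeps. auto_derive. sidec. Qed.
Lemma dSS2 rl vl pl rr vr pr rMl rMr : rMr - rr <> 0 -> ex_derive (SS2 rl vl pl rr vr pr rMl rMr) 0.
Proof. intro H. unfold SS2, Beps, Aeps. auto_derive. sidec. Qed.
Lemma dqq0 rl vl pl rr vr pr rMl rMr : rMl - rl <> 0 -> ex_derive (qq0 rl vl pl rr vr pr rMl rMr) 0.
Proof. intro H. unfold qq0, Aeps. auto_derive. sidec. Qed.
Lemma dqq1 rl vl pl rr vr pr rMl rMr : ex_derive (qq1 rl vl pl rr vr pr rMl rMr) 0.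
Proof. unfold qq1. auto_derive. sidec. Qed.
Lemma dqq2 rl vl pl rr vr pr rMl rMr : rMr - rr <> 0 -> ex_derive (qq2 rl vl pl rr vr pr rMl rMr) 0.
Proof. intro H. unfold qq2, Aeps. auto_derive. sidec. Qed.

Lemma dMM0 rl vl pl rr vr pr rMl rMr : rMl - rl <> 0 -> 0 < SS0 rl vl pl rr vr pr rMl rMr 0 ->
  0 < NN0 rl vl pl rr vr pr rMl rMr 0 -> ex_derive (MM0 rl vl pl rr vr pr rMl rMr) 0.
Proof. intros H1 H2 H3. unfold MM0. pose proof (sqrt_pos (SS0 rl vl pl rr vr pr rMl rMr 0)).
  auto_derive. repeat split; auto using dqq0, dNN0, dSS0. intro; lra. Qed.
Lemma dMM1 rl vl pl rr vr pr rMl rMr : 0 < SS1 rl vl pl rr vr pr rMl rMr 0 ->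
  0 < NN1 rl vl pl rr vr pr rMl rMr 0 -> ex_derive (MM1 rl vl pl rr vr pr rMl rMr) 0.
Proof. intros H2 H3. unfold MM1. pose proof (sqrt_pos (SS1 rl vl pl rr vr pr rMl rMr 0)).
  auto_derive. repeat split; auto using dqq1, dNN1, dSS1. intro; lra. Qed.
Lemma dMM2 rl vl pl rr vr pr rMl rMr : rMr - rr <> 0 -> 0 < SS2 rl vl pl rr vr pr rMl rMr 0 ->
  0 < NN2 rl vl pl rr vr pr rMl rMr 0 -> ex_derive (MM2 rl vl pl rr vr pr rMl rMr) 0.
Proof. intros H1 H2 H3. unfold MM2. pose proof (sqrt_pos (SS2 rl vl pl rr vr pr rMl rMr 0)).
  auto_derive. repeat split; auto using dqq2, dNN2, dSS2. intro; lra. Qed.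

Theorem proposition5p3 (cv rl vl pl rr vr pr rMl rMr vM pM emax : R) :
  cv > / 2 ->
  rl > 0 -> pl > 0 -> rr > 0 -> pr > 0 ->
  shock_contact_shock cv rl vl pl rr vr pr rMl rMr vM pM ->
  vM = 0 ->
  eps_max_ok rl vl pl rr vr pr rMl rMr emax ->
  lim_at0 emax pM (C_1 cv rl vl pl rr vr pr rMl rMr pM) (vM ^ 2) /\
  lim_at0 emax pM (C_2 cv rl vl pl rr vr pr rMl rMr pM) (vM ^ 2) /\
  lim_at0 emax pM (gamma1 cv rl vl pl rr vr pr rMl rMr pM) (- (vM ^ 2 / 2)) /\
  lim_at0 emax pM (gamma2 cv rl vl pl rr vr pr rMl rMr pM) (- (vM ^ 2 / 2)).
Proof.
  intros Hcv Hrl Hpl Hrr Hpr [sm [sp [Hsm [Hsp [RH1 [RH2 [HMl [HMr HpM]]]]]]]] HvM [Hem Hok].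
  subst vM. destruct RH1 as [E1 [E2 E3]]. destruct RH2 as [F1 [F2 F3]].
  destruct (at0 rl vl pl rr vr pr rMl rMr pM sm sp) as
    [V0 [V1 [V2 [PS0 [PS1 [PS2 [PN0 [PN1 PN2]]]]]]]]; auto; try lra.
  destruct (near_pos _ (cont_of_deriv _ _ (dNN0 rl vl pl rr vr pr rMl rMr)) PN0) as [r1 [Hr1 K1]].
  destruct (near_pos _ (cont_of_deriv _ _ (dNN1 rl vl pl rr vr pr rMl rMr)) PN1) as [r2 [Hr2 K2]].
  destruct (near_pos _ (cont_of_deriv _ _ (dNN2 rl vl pl rr vr pr rMl rMr)) PN2) as [r3 [Hr3 K3]].
  set (r0 := Rmin r1 (Rmin r2 r3)).
  assert (Hr0 : 0 < r0) by (unfold r0; repeat apply Rmin_pos; auto).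
  assert (Heqs : forall e, 0 < e <= emax -> e < r0 ->
     mu0 rl vl pl rr vr pr rMl rMr e = MM0 rl vl pl rr vr pr rMl rMr e /\
     mu1 rl vl pl rr vr pr rMl rMr e = MM1 rl vl pl rr vr pr rMl rMr e /\
     mu2 rl vl pl rr vr pr rMl rMr e = MM2 rl vl pl rr vr pr rMl rMr e).
  { intros e He Her.
    assert (e < r1) by (eapply Rlt_le_trans; [exact Her| apply Rmin_l]).
    assert (e < r2) by (eapply Rlt_le_trans; [exact Her| eapply Rle_trans; [apply Rmin_r| apply Rmin_l]]).
    assert (e < r3) by (eapply Rlt_le_trans; [exact Her| eapply Rle_trans; [apply Rmin_r| apply Rmin_r]]).
    destruct (Hok e He) as [HA [HB [Hb [Ha _]]]].
    specialize (K1 e ltac:(lra)). specialize (K2 e ltac:(lra)). specialize (K3 e ltac:(lra)).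
    split; [|split].
    - apply mu0_eq; auto; try lra.
      + unfold SS0. apply Rmult_le_pos; [apply Rmult_le_pos|]; try lra.
        * apply pow2_ge_0.
        * apply Rlt_le, Rdiv_lt_0_compat; lra.
      + pose proof (sqrt_pos (SS0 rl vl pl rr vr pr rMl rMr e)). lra.
    - apply mu1_eq; auto; try lra.
      + unfold SS1. apply Rmult_le_pos; [apply Rmult_le_pos|]; try lra.
      + pose proof (sqrt_pos (SS1 rl vl pl rr vr pr rMl rMr e)). lra.
    - apply mu2_eq; auto; try lra.
      + unfold SS2. apply Rmult_le_pos; [apply Rmult_le_pos|]; try lra.
        * apply pow2_ge_0.
        * apply Rlt_le, Rdiv_lt_0_compat; lra.
      + pose proof (sqrt_pos (SS2 rl vl pl rr vr pr rMl rMr e)). lra. }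
  unfold energy, energy_flux in E3, F3.
  assert (L := side cv rl vl pl pM sm emax r0 (fun e => rMl + e)
     (MM0 rl vl pl rr vr pr rMl rMr) (MM1 rl vl pl rr vr pr rMl rMr)
     (mu0 rl vl pl rr vr pr rMl rMr) (mu1 rl vl pl rr vr pr rMl rMr)).
  assert (R := side cv rr vr pr pM sp emax r0 (fun e => rMr - e)
     (MM2 rl vl pl rr vr pr rMl rMr) (MM1 rl vl pl rr vr pr rMl rMr)
     (mu2 rl vl pl rr vr pr rMl rMr) (mu1 rl vl pl rr vr pr rMl rMr)).
  destruct L as [L1 L2].
  { auto_derive; auto. }
  { apply dMM0; auto; lra. }
  { apply dMM1; auto. }
  { lra. }
  { auto. }
  { auto. }
  { lra. }
  { lra. }
  { transitivity (sm * (/ 2 * rMl * 0 ^ 2 + cv * pM - (/ 2 * rl * vl ^ 2 + cv * pl))); [ring|].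
    rewrite E3. ring. }
  { auto. }
  { intros e He Her. destruct (Heqs e He Her) as [? [? ?]]. auto. }
  destruct R as [R1 R2].
  { auto_derive; auto. }
  { apply dMM2; auto; lra. }
  { apply dMM1; auto. }
  { lra. }
  { auto. }
  { auto. }
  { lra. }
  { lra. }
  { transitivity (- (sp * (/ 2 * rr * vr ^ 2 + cv * pr - (/ 2 * rMr * 0 ^ 2 + cv * pM)))); [ring|].
    rewrite F3. ring. }
  { auto. }
  { intros e He Her. destruct (Heqs e He Her) as [? [? ?]]. auto. }
  split; [exact L1 | split; [exact R1 | split; [exact L2 | exact R2]]].
Qed.
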